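(* Let $Y$, $X$ be real random variables and $\boldsymbol{Z}=(Z_1,\ldots,Z_{k_z})^T$ a random $k_z$-vector, with finite second moments and known joint distribution, satisfying $$Y=X\beta+\boldsymbol{Z}^T\boldsymbol{\gamma}+U,\qquad \operatorname{cov}(\boldsymbol{Z},U)=\boldsymbol{\alpha},$$ where $\beta\in\mathbb{R}$ is unknown, $\boldsymbol{\gamma},\boldsymbol{\alpha}\in\mathbb{R}^{k_z}$ are unknown and $U$ is an unobserved random variable. Assume: (1) (relevance) $\operatorname{cov}(\boldsymbol{Z},X)\neq\boldsymbol{0}$; (2) (sufficient variation) $\boldsymbol{\Sigma}_z:=\operatorname{var}(\boldsymbol{Z})$ is invertible; (3) (invalid instruments) $\gamma_\ell\alpha_\ell=0$ for every $\ell\in\{1,\ldots,k_z\}$; (4) (general partial exogeneity and exclusion) there are known constants $\tilde\delta_j\geq 0$, $j=1,\ldots,s_{k_z}$, such that $\left|(\operatorname{var}(\tilde Z_j))^{-1}\operatorname{cov}(\tilde Z_j,\tilde U)\right|\leq\tilde\delta_j$ for all $j$, where $\tilde U:=Y-X\beta=\boldsymbol{Z}^T\boldsymbol{\gamma}+U$ and $\tilde Z_j$ are the transformed instruments defined in the context. Then: (i) The falsification adaptive set is $$FAS=\left[\min_{j\in\tilde{\mathcal{L}}_{rel}}\frac{\tilde\psi_j}{\tilde\pi_j},\ \max_{j\in\tilde{\mathcal{L}}_{rel}}\frac{\tilde\psi_j}{\tilde\pi_j}\right],$$ where $\tilde{\mathcal{L}}_{rel}=\{j\in\{1,\ldots,s_{k_z}\}:\tilde\pi_j\neq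 0\}$ and $s_{k_z}=k_z2^{k_z-1}$ is the number of all just-identified IV model specifications. (ii) If there is at least one instrument that is relevant and valid, then $\beta\in FAS$, so that $FAS$ is the identified set for $\beta$.
   Context: Transformed just-identifying instruments: for $\ell\in\{1,\ldots,k_z\}$ let $A_{-\ell}=\{1,\ldots,k_z\}\setminus\{\ell\}$ and let $C$ range over all $2^{k_z-1}$ subsets of $A_{-\ell}$ (including $\emptyset$ and $A_{-\ell}$). Define the population linear projection error $Z_{\ell|C}:=Z_\ell-\boldsymbol{Z}_C^T\boldsymbol{\phi}_{C\ell}$, where $\boldsymbol{\phi}_{C\ell}=(\operatorname{var}(\boldsymbol{Z}_C))^{-1}\operatorname{cov}(\boldsymbol{Z}_C,Z_\ell)$ (with $Z_{\ell|\emptyset}=Z_\ell$); it is the just-identifying instrument in the specification where $\boldsymbol{Z}_C$ are included as controls and $\boldsymbol{Z}_{A_{-\ell}\setminus C}$ are omitted. Enumerating all pairs $(\ell,C)$ gives $s_{k_z}=k_z2^{k_z-1}$ variables $\tilde Z_1,\ldots,\tilde Z_{s_{k_z}}$. Set $\tilde\pi_j=(\operatorname{var}(\tilde Z_j))^{-1}\operatorname{cov}(\tilde Z_j,X)$ and $\tilde\psi_j=(\operatorname{var}(\tilde Z_j))^{-1}\operatorname{cov}(\tilde Z_j,Y)$; $\tilde Z_j$ is called relevant if $\tilde\pi_j\neq0$. Identified set: for $\tilde{\boldsymbol{\delta}}\in\mathbb{R}^{s_{k_z}}_{\geq0}$, $\mathcal{B}(\tilde{\boldsymbol{\delta}})=\{b\in\mathbb{R}:-\tilde{\boldsymbol{\delta}}\leq\tilde{\boldsymbol{\psi}}-\tilde{\boldsymbol{\pi}}b\leq\tilde{\boldsymbol{\delta}}\}$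 (componentwise). The falsification frontier $FF$ is the set of $\tilde{\boldsymbol{\delta}}\geq0$ with $\mathcal{B}(\tilde{\boldsymbol{\delta}})\neq\emptyset$ but $\mathcal{B}(\tilde{\boldsymbol{\delta}}')=\emptyset$ for every $\tilde{\boldsymbol{\delta}}'<\tilde{\boldsymbol{\delta}}$, where $\tilde{\boldsymbol{\delta}}'<\tilde{\boldsymbol{\delta}}$ means $\tilde\delta'_j\leq\tilde\delta_j$ for all $j$ with strict inequality for some $j$. The falsification adaptive set is $FAS=\bigcup_{\tilde{\boldsymbol{\delta}}\in FF}\mathcal{B}(\tilde{\boldsymbol{\delta}})$. An instrument $Z_\ell$ is valid if $\alpha_\ell=\gamma_\ell=0$. A valid instrument $Z_\ell$ is relevant here if its associated transformed just-identifying instrument $Z_{\ell|C}$, with $C=\{r\neq\ell:\gamma_r\neq0\}$ (the instruments violating exclusion included as controls and those violating exogeneity omitted), satisfies $\operatorname{cov}(Z_{\ell|C},X)\neq 0$. *)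

(* Defs.v *)
From HB Require Import structures.
From mathcomp Require Import all_boot all_order all_algebra.
From mathcomp Require Import all_classical all_reals all_analysis.
Set Implicit Arguments. Unset Strict Implicit. Unset Printing Implicit Defensive.
Import Order.TTheory GRing.Theory Num.Theory.
Local Open Scope classical_set_scope.
Local Open Scope ring_scope.

Section IVDefs.
Context {d : measure_display} {T : measurableType d} {R : realType}
  (P : probability T R).

(* real-valued covariance (finite under finite second moments) *)
Definition cov (A B : T -> R) : R := fine (covariance P A B).
Definition var (A : T -> R) : R := cov A A.

Context {k : nat} (Z : 'I_k -> T -> R).

Definition SigmaZ : 'M[R]_k := \matrix_(i, j) cov (Z i) (Z j).
Definition covZ (A : T -> R) : 'cV[R]_k := \col_i cov (Z i) A.

Definition varZC (C : {set 'I_k}) : 'M[R]_#|C| :=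
  \matrix_(i, j) cov (Z (enum_val i)) (Z (enum_val j)).
Definition covZC (C : {set 'I_k}) (l : 'I_k) : 'cV[R]_#|C| :=
  \col_i cov (Z (enum_val i)) (Z l).
Definition phiC (C : {set 'I_k}) (l : 'I_k) : 'cV[R]_#|C| :=
  invmx (varZC C) *m covZC C l.

Definition Zproj (l : 'I_k) (C : {set 'I_k}) : T -> R :=
  fun w => Z l w - \sum_(i < #|C|) Z (enum_val i) w * phiC C l i 0.

(* index set of the s_{k_z} = k_z 2^(k_z-1) just-identified specifications:
   pairs (l, C) with C a subset of {1..k_z} \ {l} *)
Definition spec_index := {p : 'I_k * {set 'I_k} | p.1 \notin p.2}.

Definition Ztilde (j : spec_index) : T -> R := Zproj (sval j).1 (sval j).2.

Definition pitilde (X : T -> R) (j : spec_index) : R :=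
  (var (Ztilde j))^-1 * cov (Ztilde j) X.
Definition psitilde (Y : T -> R) (j : spec_index) : R :=
  (var (Ztilde j))^-1 * cov (Ztilde j) Y.

Definition Bset (X Y : T -> R) (delta : spec_index -> R) : set R :=
  [set b | forall j, - delta j <= psitilde Y j - pitilde X j * b <= delta j].

Definition vlt (d1 d2 : spec_index -> R) : Prop :=
  (forall j, d1 j <= d2 j) /\ (exists j, d1 j < d2 j).

Definition FF (X Y : T -> R) : set (spec_index -> R) :=
  [set delta | (forall j, 0 <= delta j) /\ Bset X Y delta !=set0 /\
     (forall delta', (forall j, 0 <= delta' j) -> vlt delta' delta ->
        Bset X Y delta' = set0)].

Definition FAS (X Y : T -> R) : set R :=
  \bigcup_(delta in FF X Y) Bset X Y delta.

End IVDefs.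

(* Main.v *)
Require Import Defs.
From HB Require Import structures.
From mathcomp Require Import all_boot all_order all_algebra.
From mathcomp Require Import all_classical all_reals all_analysis.
From mathcomp Require Import lra.
Import Order.TTheory GRing.Theory Num.Theory.
Local Open Scope classical_set_scope.
Local Open Scope ring_scope.

Lemma distA {R : realType} (x y z : R) : x <= y -> y <= z -> `|z - y| <= `|z - x|.
Proof. move=> h1 h2; rewrite !ger0_norm ?subr_ge0 //; [lra| exact: le_trans h2]. Qed.
Lemma distB {R : realType} (x y z : R) : x <= y -> y <= z -> `|x - y| <= `|x - z|.
Proof. move=> h1 h2; rewrite !ler0_norm ?subr_le0 //; [lra| exact: le_trans h2]. Qed.
Lemma distC1 {R : realType} (x y z : R) : x <= y -> y < z -> `|x - z| <= `|x - y| -> False.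
Proof. move=> h1 h2; rewrite !ler0_norm ?subr_le0 //; [lra| exact: ltW (le_lt_trans h1 h2)]. Qed.
Lemma distC2 {R : realType} (x y z : R) : x < y -> y <= z -> `|z - x| <= `|z - y| -> False.
Proof. move=> h1 h2; rewrite !ger0_norm ?subr_ge0 //; [lra| exact: ltW (lt_le_trans h1 h2)]. Qed.

Section Abs.
Context {R : realType} {J : finType} (p q : J -> R).

Definition Bs (delta : J -> R) : set R :=
  [set b | forall j, - delta j <= q j - p j * b <= delta j].
Definition vl (d1 d2 : J -> R) : Prop :=
  (forall j, d1 j <= d2 j) /\ (exists j, d1 j < d2 j).
Definition FFs : set (J -> R) :=
  [set delta | (forall j, 0 <= delta j) /\ Bs delta !=set0 /\
     (forall delta', (forall j, 0 <= delta' j) -> vl delta' delta ->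
        Bs delta' = set0)].
Definition FASs : set R := \bigcup_(delta in FFs) Bs delta.

Let r j := q j / p j.
Let dl (b : R) j := `|q j - p j * b|.

Lemma keyn j b : p j != 0 -> `|q j - p j * b| = `|p j| * `|r j - b|.
Proof.
move=> pj; rewrite -normrM; congr `|_|; rewrite /r mulrBr [p j * (_ / _)]mulrC divfK //.
Qed.

Lemma in_dl b : Bs (dl b) b.
Proof. by move=> j; rewrite -ler_norml. Qed.

Lemma dl_ge0 b j : 0 <= dl b j.
Proof. exact: normr_ge0. Qed.

Lemma set0P' (A : set R) : (forall x, ~ A x) -> A = set0.
Proof. by move=> H; apply/funext => x; apply/propext; split => // /H. Qed.

Lemma abs_main (j0 : J) : p j0 != 0 ->
  exists jmin jmax : J,
      p jmin != 0 /\ p jmax != 0 /\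
      (forall j, p j != 0 -> r jmin <= r j <= r jmax) /\
      FASs = [set` `[r jmin, r jmax]].
Proof.
move=> pj0.
case: (@arg_minP _ R J j0 (fun j => p j != 0) r pj0) => jmin pmin Hmin.
case: (@arg_maxP _ R J j0 (fun j => p j != 0) r pj0) => jmax pmax Hmax.
exists jmin, jmax; split => //; split => //.
have Hr : forall j, p j != 0 -> r jmin <= r j <= r jmax.
  by move=> j pj; rewrite Hmin //=; exact: Hmax.
split => //.
have pos : forall j, p j != 0 -> 0 < `|p j| by move=> j pj; rewrite normr_gt0.
apply/funext => b; apply/propext; split.
- case=> delta [d0 [[b0 Hb0] Hmn]] Hb.
  have Hbd : forall j, `|q j - p j * b| <= delta j by move=> j; rewrite ler_norml.
  rewrite /= in_itv /=; apply/andP; split.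
  + rewrite leNgt; apply/negP => blt.
    set b1 := r jmin.
    suff: vl (dl b1) delta.
      by move/(Hmn _ (dl_ge0 b1)) => E; have := in_dl b1; rewrite E.
    split.
    * move=> j; apply: le_trans (Hbd j); rewrite /dl.
      have [pj|pj] := eqVneq (p j) 0.
        by rewrite pj !mul0r.
      rewrite !keyn // ler_pM2l ?pos //.
      have := Hr j pj; case/andP => h1 _.
      exact: distA (ltW blt) h1.
    * exists jmin; apply: lt_le_trans (Hbd jmin); rewrite /dl !keyn //.
      rewrite /b1 subrr normr0 mulr0 mulr_gt0 ?pos // normr_gt0 subr_eq0.
      by rewrite gt_eqF.
  + rewrite leNgt; apply/negP => blt.
    set b1 := r jmax.
    suff: vl (dl b1) delta.
      by move/(Hmn _ (dl_ge0 b1)) => E; have := in_dl b1; rewrite E.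
    split.
    * move=> j; apply: le_trans (Hbd j); rewrite /dl.
      have [pj|pj] := eqVneq (p j) 0.
        by rewrite pj !mul0r.
      rewrite !keyn // ler_pM2l ?pos //.
      have := Hr j pj; case/andP => _ h1.
      exact: distB h1 (ltW blt).
    * exists jmax; apply: lt_le_trans (Hbd jmax); rewrite /dl !keyn //.
      rewrite /b1 subrr normr0 mulr0 mulr_gt0 ?pos // normr_gt0 subr_eq0.
      by rewrite lt_eqF.
- rewrite /= in_itv /= => /andP[bmin bmax].
  exists (dl b); last exact: in_dl.
  split; first exact: dl_ge0.
  split; first by exists b; exact: in_dl.
  move=> delta' d0 [Hle [j1 Hlt]]; apply: set0P' => b' Hb'.
  have Hbd : forall j, `|q j - p j * b'| <= dl b j.
    by move=> j; apply: le_trans (Hle j); rewrite ler_norml.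
  have [bb|bb|bb] := ltgtP b b'.
  + have := Hbd jmin; rewrite /dl !keyn // ler_pM2l ?pos //.
    exact: distC1 bmin bb.
  + have := Hbd jmax; rewrite /dl !keyn // ler_pM2l ?pos //.
    exact: distC2 bb bmax.
  + subst b'.
    have := Hlt; rewrite ltNge.
    have : dl b j1 <= delta' j1 by rewrite /dl ler_norml.
    by move=> ->.
Qed.
End Abs.


Section Tool.
Context d (T : measurableType d) (R : realType) (P : probability T R).
Local Notation L2 := (Lfun P 2%:E).

Lemma L2D (f g : T -> R) : f \in L2 -> g \in L2 -> (f \+ g) \in L2.
Proof. by move=> ? ?; apply: rpredD => //; rewrite lee1n. Qed.
Lemma L2Z (f : T -> R) (a : R) : f \in L2 -> (a \o* f) \in L2.
Proof. by move=> ?; apply: Lfun_scale => //; rewrite ler1n. Qed.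
Lemma L2B (f g : T -> R) : f \in L2 -> g \in L2 -> (f \- g) \in L2.
Proof. by move=> ? ?; apply: rpredB => //; rewrite lee1n. Qed.
Lemma L2cst (c : R) : cst c \in L2.
Proof. exact: Lfun_cst. Qed.

Let Pfin : P setT \is a fin_num := fin_num_measure P _ measurableT.

Lemma cov_fin (A B : T -> R) : A \in L2 -> B \in L2 -> covariance P A B \is a fin_num.
Proof.
move=> A2 B2; apply: covariance_fin_num.
- exact: Lfun_subset12 A2.
- exact: Lfun_subset12 B2.
- exact: Lfun2_mul_Lfun1.
Qed.

Lemma covC (A B : T -> R) : cov P A B = cov P B A.
Proof. by rewrite /cov covarianceC. Qed.

Lemma covDl (A B C : T -> R) : A \in L2 -> B \in L2 -> C \in L2 ->
  cov P (A \+ B) C = cov P A C + cov P B C.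
Proof.
by move=> A2 B2 C2; rewrite /cov covarianceDl // fineD // cov_fin.
Qed.

Lemma covBl (A B C : T -> R) : A \in L2 -> B \in L2 -> C \in L2 ->
  cov P (A \- B) C = cov P A C - cov P B C.
Proof.
by move=> A2 B2 C2; rewrite /cov covarianceBl // fineB // cov_fin.
Qed.

Lemma covZl a (A B : T -> R) : A \in L2 -> B \in L2 ->
  cov P (a \o* A) B = a * cov P A B.
Proof.
move=> A2 B2; rewrite /cov covarianceZl //.
- by rewrite fineM // cov_fin.
- exact: Lfun_subset12 A2.
- exact: Lfun_subset12 B2.
- exact: Lfun2_mul_Lfun1.
Qed.

Lemma cov_cstl c (B : T -> R) : cov P (cst c) B = 0.
Proof. by rewrite /cov covariance_cst_l. Qed.

Lemma cov_var0 (A B : T -> R) : A \in L2 -> B \in L2 -> var P A = 0 -> cov P A B = 0.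
Proof.
move=> A2 B2 vA.
have VA : 'V_P[A] = 0%E.
  by rewrite -(fineK (variance_fin_num A2)); rewrite /var /cov in vA; rewrite /variance vA.
have h1 := covariance_le A2 B2.
rewrite VA sqrte0 mul0e in h1.
have NA2 : (\- A)%R \in L2.
  have -> : (\- A)%R = ((-1) \o* A)%R by apply/funext => w /=; rewrite mulrN1.
  exact: L2Z.
have h2 := covariance_le NA2 B2.
rewrite varianceN // VA sqrte0 mul0e in h2.
rewrite covarianceNl in h2; last 3 first.
- exact: Lfun_subset12 A2.
- exact: Lfun_subset12 B2.
- exact: Lfun2_mul_Lfun1.
rewrite /cov; have -> : covariance P A B = 0%E.
  by apply: le_anti; rewrite h1 /= -oppe_le0.
by [].
Qed.

Definition lin {I : Type} (s : seq I) (c : I -> R) (F : I -> T -> R) : T -> R :=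
  fun w => \sum_(i <- s) c i * F i w.

Lemma lin_nil {I : Type} (c : I -> R) F : lin [::] c F = cst 0.
Proof. by apply/funext => w; rewrite /lin big_nil. Qed.
Lemma lin_cons {I : Type} x s (c : I -> R) F : lin (x :: s) c F = (c x \o* F x) \+ lin s c F.
  apply: funext => w; rewrite /lin big_cons /= mulrC. reflexivity. Qed.

Lemma lin_L2 {I : Type} s (c : I -> R) F : (forall i, F i \in L2) -> lin s c F \in L2.
Proof.
move=> HF; elim: s => [|x s IH]; first by rewrite lin_nil L2cst.
by rewrite lin_cons L2D // L2Z.
Qed.

Lemma cov_lin_l {I : Type} s (c : I -> R) F B : (forall i, F i \in L2) -> B \in L2 ->
  cov P (lin s c F) B = \sum_(i <- s) c i * cov P (F i) B.
Proof.
move=> HF B2; elim: s => [|x s IH]; first by rewrite lin_nil cov_cstl big_nil.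
rewrite lin_cons covDl ?L2Z ?lin_L2 // covZl // IH big_cons //.
Qed.

Lemma cov_lin_r {I : Type} s (c : I -> R) F B : (forall i, F i \in L2) -> B \in L2 ->
  cov P B (lin s c F) = \sum_(i <- s) c i * cov P B (F i).
Proof.
move=> HF B2; rewrite covC cov_lin_l //; apply: eq_bigr => i _; by rewrite covC.
Qed.

Lemma covDr (A B C : T -> R) : A \in L2 -> B \in L2 -> C \in L2 ->
  cov P C (A \+ B) = cov P C A + cov P C B.
Proof. by move=> A2 B2 C2; rewrite covC covDl // !(covC _ C). Qed.

Lemma covZr a (A B : T -> R) : A \in L2 -> B \in L2 ->
  cov P B (a \o* A) = a * cov P B A.
Proof. by move=> A2 B2; rewrite covC covZl // covC. Qed.

End Tool.
Arguments lin {d T R I}.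


Section Main.
Context d (T : measurableType d) (R : realType) (P : probability T R).
Context (k : nat) (Z : 'I_k -> T -> R) (HZ : forall l, Z l \in Lfun P 2%:E).

Lemma Zproj_eq l C : Zproj P Z l C =
  (Z l \- lin (index_enum 'I_#|C|) (fun i => phiC P Z C l i 0) (fun i => Z (enum_val i)))%R.
Proof.
apply/funext => w; rewrite /Zproj /lin /=. congr (_ - _).
apply: eq_bigr => i _; exact: mulrC.
Qed.

Lemma Zproj_L2 l C : Zproj P Z l C \in Lfun P 2%:E.
Proof. by rewrite Zproj_eq; apply: L2B => //; apply: lin_L2. Qed.

Lemma cov_Zproj l C B : B \in Lfun P 2%:E ->
  cov P (Zproj P Z l C) B =
  cov P (Z l) B - \sum_(i < #|C|) phiC P Z C l i 0 * cov P (Z (enum_val i)) B.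
Proof. by move=> B2; rewrite Zproj_eq covBl ?lin_L2 // cov_lin_l. Qed.

Lemma proj_orth l C r : varZC P Z C \in unitmx -> r \in C ->
  cov P (Zproj P Z l C) (Z r) = 0.
Proof.
move=> U rC; rewrite cov_Zproj //.
set i0 := enum_rank_in rC r.
have ei0 : enum_val i0 = r by rewrite /i0 enum_rankK_in.
have -> : \sum_(i < #|C|) phiC P Z C l i 0 * cov P (Z (enum_val i)) (Z r)
        = (varZC P Z C *m phiC P Z C l) i0 0.
  rewrite !mxE; apply: eq_bigr => i _; rewrite mxE -ei0 mulrC; congr (_ * _).
  by rewrite mxE covC.
rewrite /phiC mulmxA mulmxV // mul1mx mxE ei0; rewrite covC; exact: subrr.
Qed.

Lemma varZC_unit C : SigmaZ P Z \in unitmx -> varZC P Z C \in unitmx.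
Proof.
move=> SU; apply/negPn/negP => NU.
have : \det (varZC P Z C) == 0.
  by move: NU; rewrite unitmxE unitfE negbK.
case/det0P => v vn0 vA.
pose S := lin (index_enum 'I_#|C|) (fun i => v 0 i) (fun i => Z (enum_val i)).
have S2 : S \in Lfun P 2%:E by apply: lin_L2.
have HSj : forall j : 'I_#|C|, cov P S (Z (enum_val j)) = 0.
  move=> j; rewrite /S cov_lin_l //.
  have E : (v *m varZC P Z C) 0 j = 0 by rewrite vA mxE.
  rewrite -[RHS]E mxE; apply: eq_bigr => i _; by rewrite mxE.
have VS : var P S = 0.
  rewrite /var {2}/S cov_lin_r //; apply: big1 => j _; by rewrite HSj mulr0.
have HSm : forall m, cov P S (Z m) = 0 by move=> m; apply: cov_var0.
pose w : 'rV[R]_k := \row_m \sum_i (enum_val i == m)%:R * v 0 i.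
have wS : w *m SigmaZ P Z = 0.
  apply/rowP => m'; rewrite !mxE.
  under eq_bigr => m _ do rewrite !mxE big_distrl /=.
  rewrite exchange_big /= -[RHS](HSm m') /S cov_lin_l //; apply: eq_bigr => i _.
  rewrite (bigD1 (enum_val i)) //= eqxx mul1r big1 ?addr0 //.
  by move=> m /negbTE; rewrite eq_sym => ->; rewrite !mul0r.
have w0 : w = 0 by rewrite -[w](mulmxK SU) wS mul0mx.
move: vn0; apply/negP; rewrite negbK; apply/eqP/rowP => i.
have E : w 0 (enum_val i) = 0 by rewrite w0 mxE.
rewrite [RHS]mxE -E mxE.
rewrite (bigD1 i) //= eqxx mul1r big1 ?addr0 //.
move=> j /negbTE ji; rewrite (_ : (enum_val j == enum_val i) = false) ?mul0r //.
by apply/negbTE; apply: contraFN ji => /eqP /enum_val_inj ->.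
Qed.

End Main.

Theorem proposition1 (d : measure_display) (T : measurableType d) (R : realType)
  (P : probability T R) (k : nat)
  (Y X U : T -> R) (Z : 'I_k -> T -> R)
  (beta : R) (gamma alpha : 'I_k -> R) (deltat : @spec_index k -> R) :
  Y \in Lfun P 2%:E -> X \in Lfun P 2%:E -> U \in Lfun P 2%:E ->
  (forall l, Z l \in Lfun P 2%:E) ->
  (* model *)
  (forall w, Y w = X w * beta + \sum_(l < k) Z l w * gamma l + U w) ->
  (forall l, cov P (Z l) U = alpha l) ->
  (* (1) relevance *)
  covZ P Z X != 0 ->
  (* (2) sufficient variation *)
  SigmaZ P Z \in unitmx ->
  (* (3) invalid instruments *)
  (forall l, gamma l * alpha l = 0) ->
  (* (4) general partial exogeneity and exclusion *)
  (forall j, 0 <= deltat j) ->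
  (forall j, `|(var P (Ztilde P Z j))^-1 *
               cov P (Ztilde P Z j) (fun w => Y w - X w * beta)| <= deltat j) ->
  (* (i) FAS = [min_{j in Lrel} psi_j/pi_j, max_{j in Lrel} psi_j/pi_j] *)
  (exists jmin jmax : @spec_index k,
      pitilde P Z X jmin != 0 /\ pitilde P Z X jmax != 0 /\
      (forall j, pitilde P Z X j != 0 ->
         psitilde P Z Y jmin / pitilde P Z X jmin
           <= psitilde P Z Y j / pitilde P Z X j
           <= psitilde P Z Y jmax / pitilde P Z X jmax) /\
      FAS P Z X Y = [set` `[psitilde P Z Y jmin / pitilde P Z X jmin,
                      psitilde P Z Y jmax / pitilde P Z X jmax]]) /\
  (* (ii) a relevant valid instrument implies beta \in FAS *)
  ((exists l : 'I_k, alpha l = 0 /\ gamma l = 0 /\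
      cov P (Zproj P Z l [set r | gamma r != 0]) X != 0) ->
   FAS P Z X Y beta).
Proof.
move=> HY HX HU HZ Hmod Halpha Hrel HSig Hga Hd0 Hd.
have var_ne : forall A B, A \in Lfun P 2%:E -> B \in Lfun P 2%:E ->
    cov P A B != 0 -> var P A != 0.
  move=> A B A2 B2; apply: contraNN => /eqP v0; apply/eqP; exact: cov_var0.
have [l0 Hl0] : exists l, cov P (Z l) X != 0.
  apply: contrapT => H; move/eqP: Hrel; apply; apply/matrixP => i j.
  rewrite !mxE; apply/eqP; rewrite -[_ == 0]negbK; apply/negP => Hn.
  by apply: H; exists i.
have Zp0 : Zproj P Z l0 (finset.set0 : {set 'I_k}) = Z l0.
  apply/funext => w; rewrite /Zproj big1 ?subr0 // => i _.
  by exfalso; have := leq_trans (ltn_ord i) (eq_leq (cards0 _)).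
have h0 : (l0, finset.set0 : {set 'I_k}).1 \notin (l0, finset.set0 : {set 'I_k}).2.
  by rewrite inE.
pose j0 : @spec_index k := exist (fun p : 'I_k * {set 'I_k} => p.1 \notin p.2) _ h0.
have pj0 : pitilde P Z X j0 != 0.
  rewrite /pitilde /Ztilde /= Zp0 mulf_neq0 // invr_eq0.
  exact: (var_ne _ X).
have [jmin [jmax [p1 [p2 [Hr HF]]]]] :=
  abs_main (pitilde P Z X) (psitilde P Z Y) j0 pj0.
have HF' : FAS P Z X Y = [set` `[psitilde P Z Y jmin / pitilde P Z X jmin,
                      psitilde P Z Y jmax / pitilde P Z X jmax]].
  exact: HF.
split; first by exists jmin, jmax.
case=> l [al [gl cl]].
move: cl; set C := (X in Zproj P Z l X) => cl.
have lC : l \notin C by rewrite inE gl eqxx.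
have lC' : (l, C).1 \notin (l, C).2 by [].
pose j : @spec_index k := exist (fun p : 'I_k * {set 'I_k} => p.1 \notin p.2) _ lC'.
have W2 := @Zproj_L2 _ _ _ P k Z HZ l C.
have pj : pitilde P Z X j != 0.
  rewrite /pitilde /Ztilde /= mulf_neq0 // invr_eq0.
  exact: (var_ne _ X).
have Ye : Y = ((beta \o* X) \+ lin (index_enum 'I_k) gamma Z \+ U)%R.
  apply/funext => w; rewrite Hmod /lin /=; congr (_ + _ + _).
  by apply: eq_bigr => i _; rewrite mulrC.
have covZero : cov P (Zproj P Z l C) (lin (index_enum 'I_k) gamma Z) = 0.
  rewrite cov_lin_r //; apply: big1 => r _.
  have [g0|g0] := eqVneq (gamma r) 0; first by rewrite g0 mul0r.
  rewrite proj_orth ?mulr0 //; first exact: varZC_unit.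
  by rewrite inE.
have covU : cov P (Zproj P Z l C) U = 0.
  rewrite cov_Zproj // Halpha al sub0r big1 ?oppr0 // => i _.
  have := enum_valP i; rewrite inE => gi.
  have := Hga (enum_val i); rewrite Halpha => /eqP; rewrite mulf_eq0 (negbTE gi) /=.
  by move/eqP => ->; rewrite mulr0.
have key : psitilde P Z Y j = pitilde P Z X j * beta.
  rewrite /psitilde /pitilde /Ztilde /= -mulrA; congr (_ * _).
  have M1 : (beta \o* X)%R \in Lfun P 2%:E by apply: L2Z.
  have M2 : lin (index_enum 'I_k) gamma Z \in Lfun P 2%:E by apply: lin_L2.
  have M3 : (beta \o* X \+ lin (index_enum 'I_k) gamma Z)%R \in Lfun P 2%:E by apply: L2D.
  rewrite Ye (@covDr d T R P (beta \o* X \+ lin (index_enum 'I_k) gamma Z)%R U (Zproj P Z l C)) //.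
  rewrite (@covDr d T R P (beta \o* X)%R (lin (index_enum 'I_k) gamma Z) (Zproj P Z l C)) //.
  by rewrite (@covZr d T R P beta X (Zproj P Z l C)) // covZero covU !addr0 mulrC.
have rb : psitilde P Z Y j / pitilde P Z X j = beta.
  by rewrite key mulrAC divff // mul1r.
rewrite HF' /= in_itv /= -rb.
exact: Hr j pj.
Qed.
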